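(* The categories ${}_H\mathcal M^{par}$ and $\mathbb T({}_H\mathcal M)$ are both equivalent to the category $\mathbb D({}_H\mathcal M)$.
   Context: Throughout, $k$ is a field and $H$ is a Hopf algebra over $k$ with bijective antipode $S$ and Sweedler notation $\Delta(h)=h_{(1)}\otimes h_{(2)}$. A partial $H$-module is a vector space $M$ with linear $\pi:H\to\mathrm{End}_k(M)$ satisfying, for all $h,k\in H$: - $\pi(1_H)=\mathrm{id}$; - $\pi(h)\pi(k_{(1)})\pi(S(k_{(2)}))=\pi(hk_{(1)})\pi(S(k_{(2)}))$; - $\pi(h_{(1)})\pi(S(h_{(2)}))\pi(k)=\pi(h_{(1)})\pi(S(h_{(2)})k)$; - $\pi(h)\pi(S(k_{(1)}))\pi(k_{(2)})=\pi(hS(k_{(1)}))\pi(k_{(2)})$; - $\pi(S(h_{(1)}))\pi(h_{(2)})\pi(k)=\pi(S(h_{(1)}))\pi(h_{(2)}k)$. Partial $H$-modules with linear maps commuting with all $\pi(h)$ form ${}_H\mathcal M^{par}$. For a left $H$-module $M$ and linear projection $T$, put $T_h(m)=h_{(1)}\triangleright T(S(h_{(2)})\triangleright m)$. $T$ satisfies the c-condition if $T_h\circ T=T\circ T_h$ for all $h$. Then $T(M)$ is a partial $H$-module via $\pi_T(h)(m)=T(h\triangleright m)$. The category $\mathbb T({}_H\mathcal M)$: - objects are pairs $(M,T)$, $M$ a left $H$-module, $T$ a projection satisfying the c-condition; - morphisms $(M,T)\to(N,S)$ are linear maps $f:T(M)\to S(N)$ with $f(T(h\triangleright m))=S(h\triangleright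 f(m))$ for $m\in T(M)$. A dilation of a partial $H$-module $(P,\rho)$ is $((N,T),\theta)$ with $N$ a left $H$-module, $T$ a projection on $N$ satisfying the c-condition, and $\theta:P\to T(N)$ an isomorphism of partial $H$-modules onto $(T(N),\pi_T)$. It is proper if $N$ is generated as an $H$-module by $T(N)$, and minimal if $N$ has no nonzero $H$-submodule annihilated by $T$. The category $\mathbb D({}_H\mathcal M)$: - objects are pairs $(M,T)$ with $M$ a left $H$-module and $T$ a projection satisfying the c-condition, such that $((M,T),\iota)$, with $\iota:T(M)\to M$ the inclusion, is a proper and minimal dilation of the partial $H$-module $(T(M),\pi_T)$; - morphisms $(M,T)\to(N,S)$ are $H$-linear maps $f:M\to N$ with $S\circ f=f\circ T$. *)

(* Defs.v *)
From HB Require Import structures.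
From mathcomp Require Import all_boot all_order all_algebra.
Set Implicit Arguments. Unset Strict Implicit. Unset Printing Implicit Defensive.
Import GRing.Theory.
Local Open Scope ring_scope.

(* Hom-sets carry an equality [heq] (used for morphisms that are       *)
(* represented by functions only relevant on part of their domain).    *)
Record cat := Cat {
  ob : Type;
  hom : ob -> ob -> Type;
  heq : forall a b, hom a b -> hom a b -> Prop;
  idm : forall a, hom a a;
  comp : forall a b c, hom b c -> hom a b -> hom a c }.
Arguments hom : clear implicits.
Arguments heq {_ _ _}. Arguments idm {_}. Arguments comp {_ _ _ _}.

Record functor (C D : cat) := Functor {
  fob : ob C -> ob D;
  fhom : forall a b, hom C a b -> hom D (fob a) (fob b);
  fhom_heq : forall a b (f g : hom C a b), heq f g -> heq (fhom f) (fhom g);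
  fhom_id : forall a, heq (fhom (idm a)) (idm (fob a));
  fhom_comp : forall a b c (g : hom C b c) (f : hom C a b),
      heq (fhom (comp g f)) (comp (fhom g) (fhom f)) }.
Arguments fob {_ _}. Arguments fhom {_ _} _ {_ _}.

Definition natiso_id (C D : cat) (F : functor C D) (G : functor D C) : Prop :=
  exists (al : forall a, hom C (fob G (fob F a)) a)
         (be : forall a, hom C a (fob G (fob F a))),
    [/\ (forall a, heq (comp (al a) (be a)) (idm a)),
        (forall a, heq (comp (be a) (al a)) (idm _)) &
        (forall a b (f : hom C a b),
            heq (comp f (al a)) (comp (al b) (fhom G (fhom F f))))].

Definition equivalent (C D : cat) : Prop :=
  exists (F : functor C D) (G : functor D C), natiso_id F G /\ natiso_id G F.

Section Hopf.
Variables (k : fieldType) (H : algType k).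

Definition klin (U V : lmodType k) (f : U -> V) : Prop :=
  forall (c : k) x y, f (c *: x + y) = c *: f x + f y.

Definition bilin (V : lmodType k) (B : H -> H -> V) : Prop :=
  (forall a, klin (B a)) /\ (forall b, klin (fun a => B a b)).

Definition trilin (V : lmodType k) (C : H -> H -> H -> V) : Prop :=
  [/\ (forall a b, klin (C a b)), (forall a c, klin (fun b => C a b c))
    & (forall b c, klin (fun a => C a b c))].

(* Delta(h) = \sum_(p <- delta h) p.1 (x) p.2 ; sw delta h B = \sum B(h_(1), h_(2)) *)
Definition sw (delta : H -> seq (H * H)) (V : zmodType) (h : H) (B : H -> H -> V) : V :=
  \sum_(p <- delta h) B p.1 p.2.

Record hopf := Hopf {
  delta : H -> seq (H * H);
  eps : H -> k;
  antipode : H -> H;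
  (* Delta is a well-defined linear map H -> H (x) H *)
  delta_lin : forall (V : lmodType k) (B : H -> H -> V), bilin B ->
      klin (fun h => sw delta h B);
  delta_coass : forall (V : lmodType k) (C : H -> H -> H -> V), trilin C ->
      forall h, sw delta h (fun a b => sw delta a (fun a1 a2 => C a1 a2 b))
              = sw delta h (fun a b => sw delta b (fun b1 b2 => C a b1 b2));
  delta_one : forall (V : lmodType k) (B : H -> H -> V), bilin B ->
      sw delta 1 B = B 1 1;
  delta_mul : forall (V : lmodType k) (B : H -> H -> V), bilin B ->
      forall h g, sw delta (h * g) B
        = sw delta h (fun a b => sw delta g (fun c d => B (a * c) (b * d)));
  eps_lin : forall (c : k) x y, eps (c *: x + y) = c * eps x + eps y;
  eps_one : eps 1 = 1;
  eps_mul : forall h g, eps (h * g) = eps h * eps g;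
  counit_l : forall h, sw delta h (fun a b => eps a *: b) = h;
  counit_r : forall h, sw delta h (fun a b => eps b *: a) = h;
  antipode_lin : klin antipode;
  antipode_l : forall h, sw delta h (fun a b => antipode a * b) = eps h *: 1;
  antipode_r : forall h, sw delta h (fun a b => a * antipode b) = eps h *: 1;
  antipode_bij : bijective antipode }.

End Hopf.

Section Modules.
Variables (k : fieldType) (H : algType k) (HS : hopf H).
Local Notation S := (antipode HS).
Local Notation sw := (sw (delta HS)).

Record pmod := PMod {
  pm_sp : lmodType k;
  pm_pi : H -> pm_sp -> pm_sp;
  pm_lin : forall h, klin (pm_pi h);
  pm_linH : forall (c : k) h g m, pm_pi (c *: h + g) m = c *: pm_pi h m + pm_pi g m;
  pm_one : forall m, pm_pi 1 m = m;
  pm_ax1 : forall h g m,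
      pm_pi h (sw g (fun a b => pm_pi a (pm_pi (S b) m)))
      = sw g (fun a b => pm_pi (h * a) (pm_pi (S b) m));
  pm_ax2 : forall h g m,
      sw h (fun a b => pm_pi a (pm_pi (S b) (pm_pi g m)))
      = sw h (fun a b => pm_pi a (pm_pi (S b * g) m));
  pm_ax3 : forall h g m,
      pm_pi h (sw g (fun a b => pm_pi (S a) (pm_pi b m)))
      = sw g (fun a b => pm_pi (h * S a) (pm_pi b m));
  pm_ax4 : forall h g m,
      sw h (fun a b => pm_pi (S a) (pm_pi b (pm_pi g m)))
      = sw h (fun a b => pm_pi (S a) (pm_pi (b * g) m)) }.
Arguments pm_pi : clear implicits.

Record pm_hom (M N : pmod) := PMHom {
  ph_fun : pm_sp M -> pm_sp N;
  ph_lin : klin ph_fun;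
  ph_comm : forall h m, ph_fun (pm_pi M h m) = pm_pi N h (ph_fun m) }.

Definition pm_heq (M N : pmod) (f g : pm_hom M N) := forall m, ph_fun f m = ph_fun g m.

Lemma klin_id (U : lmodType k) : klin (fun x : U => x).
Proof. by []. Qed.

Lemma klin_comp (U V W : lmodType k) (f : U -> V) (g : V -> W) :
  klin f -> klin g -> klin (fun x => g (f x)).
Proof. by move=> hf hg c x y; rewrite hf hg. Qed.

Definition pm_id (M : pmod) : pm_hom M M :=
  @PMHom M M (fun x => x) (@klin_id _) (fun _ _ => erefl).

Definition pm_comp (M N P : pmod) (g : pm_hom N P) (f : pm_hom M N) : pm_hom M P.
Proof.
refine (@PMHom M P (fun x => ph_fun g (ph_fun f x))
  (klin_comp (ph_lin f) (ph_lin g)) _).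
by move=> h m; rewrite ph_comm ph_comm.
Defined.

Definition PMcat : cat := @Cat pmod pm_hom pm_heq pm_id pm_comp.

Record hmod := HMod {
  hm_sp : lmodType k;
  hm_act : H -> hm_sp -> hm_sp;
  hm_lin : forall h, klin (hm_act h);
  hm_linH : forall (c : k) h g m, hm_act (c *: h + g) m = c *: hm_act h m + hm_act g m;
  hm_one : forall m, hm_act 1 m = m;
  hm_mul : forall h g m, hm_act (h * g) m = hm_act h (hm_act g m) }.
Arguments hm_act : clear implicits.

Definition Tsub (M : hmod) (T : hm_sp M -> hm_sp M) (h : H) (m : hm_sp M) :=
  sw h (fun a b => hm_act M a (T (hm_act M (S b) m))).

Definition c_condition (M : hmod) (T : hm_sp M -> hm_sp M) : Prop :=
  forall h m, Tsub T h (T m) = T (Tsub T h m).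

Record tobj := TObj {
  t_mod : hmod;
  t_proj : hm_sp t_mod -> hm_sp t_mod;
  t_lin : klin t_proj;
  t_idem : forall m, t_proj (t_proj m) = t_proj m;
  t_cc : c_condition t_proj }.
Arguments t_proj : clear implicits.

Definition inim (M : hmod) (T : hm_sp M -> hm_sp M) (m : hm_sp M) : Prop :=
  exists x, T x = m.

(* a morphism T(M) -> S(N) is represented by a function M -> N, whose values
   outside T(M) are irrelevant (see [tm_heq]) *)
Record tm_hom (X Y : tobj) := TMHom {
  th_fun : hm_sp (t_mod X) -> hm_sp (t_mod Y);
  th_in : forall m, inim (t_proj X) m -> inim (t_proj Y) (th_fun m);
  th_lin : forall (c : k) x y, inim (t_proj X) x -> inim (t_proj X) y ->
      th_fun (c *: x + y) = c *: th_fun x + th_fun y;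
  th_comm : forall h m, inim (t_proj X) m ->
      th_fun (t_proj X (hm_act _ h m)) = t_proj Y (hm_act _ h (th_fun m)) }.

Definition tm_heq (X Y : tobj) (f g : tm_hom X Y) :=
  forall m, inim (t_proj X) m -> th_fun f m = th_fun g m.

Definition tm_id (X : tobj) : tm_hom X X.
Proof. by refine (@TMHom X X (fun x => x) (fun m h => h) _ _). Defined.

Definition tm_comp (X Y Z : tobj) (g : tm_hom Y Z) (f : tm_hom X Y) : tm_hom X Z.
Proof.
refine (@TMHom X Z (fun x => th_fun g (th_fun f x)) _ _ _).
- by move=> m hm; apply: th_in; apply: th_in.
- by move=> c x y hx hy; rewrite th_lin // th_lin //; apply: th_in.
- by move=> h m hm; rewrite th_comm // th_comm //; apply: th_in.
Defined.

Definition TMcat : cat := @Cat tobj tm_hom tm_heq tm_id tm_comp.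

Definition is_hsub (M : hmod) (P : hm_sp M -> Prop) : Prop :=
  [/\ P 0, (forall (c : k) x y, P x -> P y -> P (c *: x + y))
    & (forall h x, P x -> P (hm_act M h x))].

Definition dil_proper (N : hmod) (T : hm_sp N -> hm_sp N) : Prop :=
  forall P, is_hsub P -> (forall m, inim T m -> P m) -> forall m, P m.

Definition dil_minimal (N : hmod) (T : hm_sp N -> hm_sp N) : Prop :=
  forall P, is_hsub P -> (forall m, P m -> T m = 0) -> forall m, P m -> m = 0.

(* objects of D(_H M): ((M,T), inclusion) is a proper and minimal dilation
   of (T(M), pi_T); the dilation property itself is automatic for the
   inclusion *)
Record dobj := DObj {
  d_t : tobj;
  d_proper : dil_proper (t_proj d_t);
  d_minimal : dil_minimal (t_proj d_t) }.

Record d_hom (X Y : dobj) := DHom {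
  dh_fun : hm_sp (t_mod (d_t X)) -> hm_sp (t_mod (d_t Y));
  dh_lin : klin dh_fun;
  dh_H : forall h m, dh_fun (hm_act _ h m) = hm_act _ h (dh_fun m);
  dh_T : forall m, t_proj (d_t Y) (dh_fun m) = dh_fun (t_proj (d_t X) m) }.

Definition d_heq (X Y : dobj) (f g : d_hom X Y) := forall m, dh_fun f m = dh_fun g m.

Definition d_id (X : dobj) : d_hom X X :=
  @DHom X X (fun x => x) (@klin_id _) (fun _ _ => erefl) (fun _ => erefl).

Definition d_comp (X Y Z : dobj) (g : d_hom Y Z) (f : d_hom X Y) : d_hom X Z.
Proof.
refine (@DHom X Z (fun x => dh_fun g (dh_fun f x))
  (klin_comp (dh_lin f) (dh_lin g)) _ _).
- by move=> h m; rewrite !dh_H.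
- by move=> m; rewrite !dh_T.
Defined.

Definition Dcat : cat := @Cat dobj d_hom d_heq d_id d_comp.

End Modules.

(* Main.v *)
Require Import Defs.
From HB Require Import structures.
From mathcomp Require Import all_boot all_order all_algebra.
From mathcomp Require Import boolp functions.
Set Implicit Arguments. Unset Strict Implicit. Unset Printing Implicit Defensive.
Import GRing.Theory.
Local Open Scope ring_scope.

Record spred (k : fieldType) (V : lmodType k) := SPred {
  sp :> V -> Prop;
  sp0 : sp 0;
  spL : forall (c : k) x y, sp x -> sp y -> sp (c *: x + y) }.

Section SubSp.
Variables (k : fieldType) (V : lmodType k) (Q : spred V).
Definition Qb : {pred V} := fun x => `[< Q x >].
Fact Qb_closed : GRing.submod_closed Qb.
Proof.
split; first by apply/asboolP; apply: sp0.
by move=> c u v /asboolP hu /asboolP hv; apply/asboolP; apply: spL.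
Qed.
HB.instance Definition _ := GRing.isSubmodClosed.Build k V Qb Qb_closed.
Record subsp := SubSp { ssval :> V; ssP : ssval \in Qb }.
HB.instance Definition _ := [isSub for ssval].
HB.instance Definition _ := [Choice of subsp by <:].
HB.instance Definition _ := [SubChoice_isSubLmodule of subsp by <:].
Definition mkss (x : V) (h : Q x) : subsp := SubSp (asboolT h).
Lemma ssQ (x : subsp) : Q (ssval x).
Proof. exact/asboolP/ssP. Qed.
Lemma ssvalD (c : k) (x y : subsp) : ssval (c *: x + y) = c *: ssval x + ssval y.
Proof. by []. Qed.
Lemma ssval0 : ssval (0 : subsp) = 0. Proof. by []. Qed.
Lemma ss_inj (x y : subsp) : ssval x = ssval y -> x = y.
Proof. exact: val_inj. Qed.
End SubSp.

Section Main.
Variables (k : fieldType) (H : algType k) (HS : hopf H).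
Local Notation S := (antipode HS).
Local Notation sw := (sw (delta HS)).
Local Notation eps := (eps HS).
Local Notation act M := (@hm_act k H M).

Lemma Slin c x y : S (c *: x + y) = c *: S x + S y. Proof. exact: antipode_lin. Qed.
Lemma Sl h : sw h (fun a b => S a * b) = eps h *: 1. Proof. exact: antipode_l. Qed.
Lemma Sr h : sw h (fun a b => a * S b) = eps h *: 1. Proof. exact: antipode_r. Qed.
Lemma cr h : sw h (fun a b => eps b *: a) = h. Proof. exact: counit_r. Qed.
Lemma cl h : sw h (fun a b => eps a *: b) = h. Proof. exact: counit_l. Qed.

Section KL.
Variables (U V : lmodType k) (f : U -> V) (hf : klin f).
Lemma klin0 : f 0 = 0.
Proof.
have := hf 1 0 0; rewrite scaler0 addr0 scale1r => e.
by apply/eqP; rewrite -(subrr (f 0)) {2}e addrK.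
Qed.
Lemma klinD x y : f (x + y) = f x + f y.
Proof. by have := hf 1 x y; rewrite !scale1r. Qed.
Lemma klinZ c x : f (c *: x) = c *: f x.
Proof. by have := hf c x 0; rewrite !addr0 klin0 addr0. Qed.
Lemma klinB x y : f (x - y) = f x - f y.
Proof. by have := hf (-1) y x; rewrite !scaleN1r addrC => ->; rewrite addrC. Qed.
Lemma klin_sum (I : Type) (s : seq I) (F : I -> U) :
  f (\sum_(i <- s) F i) = \sum_(i <- s) f (F i).
Proof. elim: s => [|i s IH]; by rewrite ?big_nil ?klin0 // !big_cons klinD IH. Qed.
Lemma sw_lin h (B : H -> H -> U) : f (sw h B) = sw h (fun a b => f (B a b)).
Proof. exact: klin_sum. Qed.
End KL.

Lemma sw_ext (V : zmodType) h (B B' : H -> H -> V) :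
  (forall a b, B a b = B' a b) -> sw h B = sw h B'.
Proof. by move=> e; apply: eq_bigr => p _; apply: e. Qed.

Lemma sw_to (V : zmodType) h (B2 B : H -> H -> V) :
  (forall a b, B a b = B2 a b) -> sw h B = sw h B2.
Proof. exact: sw_ext. Qed.
Arguments sw_to {V} h B2 {B}.

Lemma swD (V : zmodType) h (B B' : H -> H -> V) :
  sw h (fun a b => B a b + B' a b) = sw h B + sw h B'.
Proof. exact: big_split. Qed.

Lemma swZ (V : lmodType k) h c (B : H -> H -> V) :
  sw h (fun a b => c *: B a b) = c *: sw h B.
Proof. by rewrite /Defs.sw scaler_sumr. Qed.

Lemma klin_actH (M : hmod H) m : klin (fun h : H => act M h m).
Proof. by move=> c x y; rewrite hm_linH. Qed.

Lemma act0 (M : hmod H) h : act M h 0 = 0.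
Proof. exact: (klin0 (hm_lin h)). Qed.

Lemma actH0 (M : hmod H) m : act M 0 m = 0.
Proof. by have /= := klin0 (@klin_actH M m). Qed.

Lemma actZH (M : hmod H) c h m : act M (c *: h) m = c *: act M h m.
Proof. by have /= := klinZ (@klin_actH M m) c h. Qed.

Lemma act_sw (M : hmod H) h (B : H -> H -> H) m :
  act M (sw h B) m = sw h (fun a b => act M (B a b) m).
Proof. by have /= := sw_lin (@klin_actH M m) h B. Qed.

Lemma act_eps1 (M : hmod H) c m : act M (c *: 1) m = c *: m.
Proof. by rewrite actZH hm_one. Qed.

Section TL.
Variables (M : hmod H) (T : hm_sp M -> hm_sp M) (hT : klin T).

Definition Esub h m := sw h (fun a b => act M (S a) (T (act M b m))).

Lemma Tsub_linH c h g m : Tsub HS T (c *: h + g) m = c *: Tsub HS T h m + Tsub HS T g m.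
Proof.
rewrite /Tsub; apply: (delta_lin HS (B := fun a b => act M a (T (act M (S b) m)))).
split=> [a|b] c' x y /=.
  by rewrite Slin hm_linH hT hm_lin.
by rewrite hm_linH.
Qed.

Lemma Tsub_lin h : klin (Tsub HS T h).
Proof.
move=> c x y; rewrite /Tsub -swZ -swD; apply: sw_ext => a b.
by rewrite hm_lin hT hm_lin.
Qed.

Lemma L1 u y : act M u (T y) = sw u (fun a b => Tsub HS T a (act M b y)).
Proof.
rewrite /Tsub.
rewrite (delta_coass HS (C := fun c d b => act M c (T (act M (S d) (act M b y))))); last first.
  split=> [a b|a c|b c] c' x z /=.
  - by rewrite hm_linH hm_lin hT hm_lin.
  - by rewrite Slin hm_linH hT hm_lin.
  - by rewrite hm_linH.
rewrite (sw_to _ (fun a b => eps b *: act M a (T y))); last first.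
  move=> a b.
  rewrite -(sw_lin (f := fun z => act M a (T z))); last first.
    by move=> c x z; rewrite hT hm_lin.
  rewrite (sw_to _ (fun c d => act M (S c * d) y)); last by move=> c d; rewrite hm_mul.
  by rewrite -act_sw Sl act_eps1 (klinZ hT) (klinZ (hm_lin a)).
rewrite (sw_to _ (fun a b => act M (eps b *: a) (T y))); last by move=> a b; rewrite actZH.
by rewrite -act_sw cr.
Qed.

Hypothesis cc : c_condition HS T.

Lemma L2 h y : Esub h (T y) = T (Esub h y).
Proof.
rewrite /Esub.
rewrite (sw_to _ (fun a b => sw b (fun c d => act M (S a) (T (Tsub HS T c (act M d y)))))); last first.
  move=> a b; rewrite (L1 b y) (sw_lin (f := fun z => act M (S a) (T z))) //.
  by move=> c x z; rewrite hT hm_lin.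
rewrite -(delta_coass HS (C := fun a c d => act M (S a) (T (Tsub HS T c (act M d y))))); last first.
  split=> [a b|a c|b c] c' x z /=.
  - by rewrite hm_linH Tsub_lin hT hm_lin.
  - by rewrite Tsub_linH hT hm_lin.
  - by rewrite Slin hm_linH.
rewrite (sw_to _ (fun a b => T (act M (S a) (T (act M b y))))); last first.
  move=> a b.
  rewrite (sw_to _ (fun a1 a2 => sw a2 (fun c d => act M (S a1 * c) (T (act M (S d) (T (act M b y))))))); last first.
    move=> a1 a2; rewrite -cc /Tsub (sw_lin (hm_lin (S a1))).
    by apply: sw_ext => c d; rewrite hm_mul.
  rewrite -(delta_coass HS (C := fun c d e => act M (S c * d) (T (act M (S e) (T (act M b y)))))); last first.
    split=> [a1 b1|a1 c1|b1 c1] c' x z /=.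
    - by rewrite Slin hm_linH hT hm_lin.
    - by rewrite mulrDr -scalerAr hm_linH.
    - by rewrite Slin mulrDl -scalerAl hm_linH.
  rewrite (sw_to _ (fun a1 a2 => act M (eps a1 *: 1) (T (act M (S a2) (T (act M b y)))))); last first.
    by move=> a1 a2; rewrite -act_sw Sl.
  set w := T (act M b y).
  have lf : klin (fun h => T (act M (S h) w)) by move=> c x z; rewrite Slin hm_linH hT.
  rewrite (sw_to _ (fun a1 a2 => T (act M (S (eps a1 *: a2)) w))).
    by rewrite -(sw_lin lf) cl.
  by move=> a1 a2; rewrite act_eps1; have /= -> := klinZ lf (eps a1) a2.
by rewrite (sw_lin hT).
Qed.
End TL.

Lemma ssval_lin (V : lmodType k) (Q : spred V) : klin (@ssval k V Q).
Proof. by []. Qed.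

Section PT.
Variable X : tobj HS.
Local Notation M := (t_mod X).
Local Notation T := (@t_proj _ _ HS X).
Let hT := @t_lin _ _ HS X.
Let Tid := @t_idem _ _ HS X.
Let cc := @t_cc _ _ HS X.

Lemma fix0 : T 0 = 0. Proof. exact: klin0 hT. Qed.
Lemma fixL c x y : T x = x -> T y = y -> T (c *: x + y) = c *: x + y.
Proof. by move=> hx hy; rewrite hT hx hy. Qed.
Definition fixsp : spred (hm_sp M) := @SPred k (hm_sp M) (fun m => T m = m) fix0 fixL.
Definition PTsp : lmodType k := subsp fixsp.
Definition PTpi (h : H) (m : PTsp) : PTsp := @mkss k _ fixsp (T (act M h (ssval m))) (Tid _).

Lemma PTpiE h m : ssval (PTpi h m) = T (act M h (ssval m)). Proof. by []. Qed.
Lemma ssfix (m : PTsp) : T (ssval m) = ssval m. Proof. exact: (ssQ m). Qed.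

Lemma valsw h (B : H -> H -> PTsp) : ssval (sw h B) = sw h (fun a b => ssval (B a b)).
Proof. exact: (sw_lin (@ssval_lin _ fixsp)). Qed.

Lemma klinTact h : klin (fun z => T (act M h z)).
Proof. by move=> c x y; rewrite hm_lin hT. Qed.

Lemma PT_lin h : klin (PTpi h).
Proof. by move=> c x y; apply: ss_inj; rewrite /= hm_lin hT. Qed.
Lemma PT_linH c h g m : PTpi (c *: h + g) m = c *: PTpi h m + PTpi g m.
Proof. by apply: ss_inj; rewrite /= hm_linH hT. Qed.
Lemma PT_one m : PTpi 1 m = m.
Proof. by apply: ss_inj; rewrite /= hm_one ssfix. Qed.

Lemma PT_ax1 h g m :
  PTpi h (sw g (fun a b => PTpi a (PTpi (S b) m)))
  = sw g (fun a b => PTpi (h * a) (PTpi (S b) m)).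
Proof.
apply: ss_inj; rewrite PTpiE !valsw /=.
rewrite -(sw_lin hT) -/(Tsub HS T g (ssval m)) -cc (ssfix m).
rewrite (sw_to _ (fun a b => T (act M h (act M a (T (act M (S b) (ssval m))))))); last first.
  by move=> a b; rewrite hm_mul.
by rewrite -(sw_lin (klinTact h)).
Qed.

Lemma PT_ax2 h g m :
  sw h (fun a b => PTpi a (PTpi (S b) (PTpi g m)))
  = sw h (fun a b => PTpi a (PTpi (S b * g) m)).
Proof.
apply: ss_inj; rewrite !valsw /=.
rewrite -(sw_lin hT) -/(Tsub HS T h (T (act M g (ssval m)))) cc Tid.
rewrite (sw_to _ (fun a b => T (act M a (T (act M (S b) (act M g (ssval m))))))); last first.
  by move=> a b; rewrite hm_mul.
by rewrite -(sw_lin hT).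
Qed.

Lemma PT_ax3 h g m :
  PTpi h (sw g (fun a b => PTpi (S a) (PTpi b m)))
  = sw g (fun a b => PTpi (h * S a) (PTpi b m)).
Proof.
apply: ss_inj; rewrite PTpiE !valsw /=.
rewrite -(sw_lin hT) -/(Esub T g (ssval m)) -(L2 hT cc) (ssfix m).
rewrite (sw_to _ (fun a b => T (act M h (act M (S a) (T (act M b (ssval m))))))); last first.
  by move=> a b; rewrite hm_mul.
by rewrite -(sw_lin (klinTact h)).
Qed.

Lemma PT_ax4 h g m :
  sw h (fun a b => PTpi (S a) (PTpi b (PTpi g m)))
  = sw h (fun a b => PTpi (S a) (PTpi (b * g) m)).
Proof.
apply: ss_inj; rewrite !valsw /=.
rewrite -(sw_lin hT) -/(Esub T h (T (act M g (ssval m)))) (L2 hT cc) Tid.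
rewrite (sw_to _ (fun a b => T (act M (S a) (T (act M b (act M g (ssval m))))))); last first.
  by move=> a b; rewrite hm_mul.
by rewrite -(sw_lin hT).
Qed.

Definition PTmod : pmod HS :=
  @PMod k H HS PTsp PTpi PT_lin PT_linH PT_one PT_ax1 PT_ax2 PT_ax3 PT_ax4.
End PT.


Lemma sw_sum (V : zmodType) (I : Type) (s : seq I) h (F : I -> H -> H -> V) :
  sw h (fun a b => \sum_(i <- s) F i a b) = \sum_(i <- s) sw h (F i).
Proof. exact: exchange_big. Qed.

Lemma klin_ev (V : lmodType k) (x : H) : klin (fun f : H -> V => f x).
Proof. by []. Qed.

Lemma fctE (V : lmodType k) (f g : H -> V) c y : (c *: f + g) y = c *: f y + g y.
Proof. by []. Qed.

Section G.
Variable P : pmod HS.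
Local Notation pi := (@pm_pi _ _ HS P).
Local Notation PV := (pm_sp P).

Definition Ngen (f : H -> PV) :=
  exists s : seq (H * PV), f = (fun y => \sum_(p <- s) pi (y * p.1) p.2).

Lemma Ngen0 : Ngen 0.
Proof. by exists [::]; apply: funext => y; rewrite big_nil. Qed.

Lemma NgenL c f g : Ngen f -> Ngen g -> Ngen (c *: f + g).
Proof.
move=> [s1 ->] [s2 ->]; exists ([seq (p.1, c *: p.2) | p <- s1] ++ s2).
apply: funext => y; rewrite fctE big_cat big_map scaler_sumr; congr (_ + _).
by apply: eq_bigr => p _ /=; rewrite (klinZ (pm_lin _)).
Qed.

Definition Nsp : spred (H -> PV) := @SPred k _ Ngen Ngen0 NgenL.
Definition Gsp : lmodType k := subsp Nsp.

Lemma Ngen_shift h f : Ngen f -> Ngen (fun y => f (y * h)).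
Proof.
move=> [s ->]; exists [seq (h * p.1, p.2) | p <- s].
by apply: funext => y; rewrite big_map; apply: eq_bigr => p _; rewrite mulrA.
Qed.

Lemma Ngen_lin f : Ngen f -> klin f.
Proof.
move=> [s ->] c x y; rewrite scaler_sumr -big_split; apply: eq_bigr => p _ /=.
by rewrite mulrDl -scalerAl pm_linH.
Qed.

Lemma Ngen_phi m : Ngen (fun y => pi y m).
Proof. by exists [:: (1, m)]; apply: funext => y; rewrite big_cons big_nil addr0 mulr1. Qed.

Definition Gact (h : H) (f : Gsp) : Gsp := @mkss k _ Nsp _ (Ngen_shift h (ssQ f)).
Definition phi (m : PV) : Gsp := @mkss k _ Nsp _ (Ngen_phi m).
Definition GT (f : Gsp) : Gsp := phi (ssval f 1).

Lemma GactE h f y : ssval (Gact h f) y = ssval f (y * h). Proof. by []. Qed.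
Lemma phiE m y : ssval (phi m) y = pi y m. Proof. by []. Qed.
Lemma GTE f y : ssval (GT f) y = pi y (ssval f 1). Proof. by []. Qed.

Lemma Gval_sw h (B : H -> H -> Gsp) y :
  ssval (sw h B) y = sw h (fun a b => ssval (B a b) y).
Proof. by rewrite (sw_lin (@ssval_lin _ Nsp)) (sw_lin (@klin_ev _ y)). Qed.

Lemma Gval_sum (I : Type) (s : seq I) (F : I -> Gsp) y :
  ssval (\sum_(i <- s) F i) y = \sum_(i <- s) ssval (F i) y.
Proof. by rewrite (klin_sum (@ssval_lin _ Nsp)) (klin_sum (@klin_ev _ y)). Qed.

Lemma G_lin h : klin (Gact h).
Proof. by move=> c x y; apply: ss_inj; apply: funext. Qed.
Lemma G_linH c h g m : Gact (c *: h + g) m = c *: Gact h m + Gact g m.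
Proof.
apply: ss_inj; apply: funext => y /=.
by rewrite mulrDr -scalerAr (Ngen_lin (ssQ m)).
Qed.
Lemma G_one m : Gact 1 m = m.
Proof. by apply: ss_inj; apply: funext => y /=; rewrite mulr1. Qed.
Lemma G_mul h g m : Gact (h * g) m = Gact h (Gact g m).
Proof. by apply: ss_inj; apply: funext => y /=; rewrite mulrA. Qed.

Definition Gmod : hmod H := @HMod k H Gsp Gact G_lin G_linH G_one G_mul.

Lemma GT_lin : klin (GT : hm_sp Gmod -> hm_sp Gmod).
Proof. by move=> c x y; apply: ss_inj; apply: funext => z /=; rewrite pm_lin. Qed.
Lemma GT_idem (f : hm_sp Gmod) : GT (GT f) = GT f.
Proof. by apply: ss_inj; apply: funext => z /=; rewrite pm_one. Qed.

Lemma GT_phi m : GT (phi m) = phi m.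
Proof. by apply: ss_inj; apply: funext => z /=; rewrite pm_one. Qed.

Lemma GT_cc : c_condition HS (GT : hm_sp Gmod -> hm_sp Gmod).
Proof.
move=> h f; apply: ss_inj; apply: funext => x.
rewrite /Tsub GTE !Gval_sw /=.
have [s e] := ssQ f; rewrite e.
rewrite (sw_to _ (fun a b => \sum_(p <- s) pi (x * a) (pi (S b) (pi p.1 p.2)))); last first.
  move=> a b; rewrite mul1r (klin_sum (pm_lin _)) (klin_sum (pm_lin _)).
  by apply: eq_bigr => p _; rewrite mul1r.
rewrite [in RHS](sw_to _ (fun a b => \sum_(p <- s) pi a (pi (S b * p.1) p.2))); last first.
  move=> a b; rewrite mul1r (klin_sum (pm_lin _)).
  by apply: eq_bigr => p _; rewrite mul1r.
rewrite !sw_sum (klin_sum (pm_lin _)); apply: eq_bigr => p _.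
by rewrite -pm_ax2 pm_ax1.
Qed.

Definition Gtobj : tobj HS := @TObj k H HS Gmod GT GT_lin GT_idem GT_cc.

Lemma G_proper : dil_proper (GT : hm_sp Gmod -> hm_sp Gmod).
Proof.
move=> Pr [P0 PL PA] Pim f.
have [s e] := ssQ f.
have -> : f = \sum_(p <- s) Gact p.1 (phi p.2).
  apply: ss_inj; apply: funext => y; rewrite e Gval_sum.
  by apply: eq_bigr => p _.
elim: s {e} => [|p s IH]; first by rewrite big_nil.
rewrite big_cons -(scale1r (Gact _ _)); apply: PL => //.
by apply: PA; apply: Pim; exists (phi p.2); apply: GT_phi.
Qed.

Lemma G_minimal : dil_minimal (GT : hm_sp Gmod -> hm_sp Gmod).
Proof.
move=> Pr [P0 PL PA] PT0 f Pf; apply: ss_inj; apply: funext => x.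
have := PT0 _ (PA x _ Pf) => /(congr1 (fun g : Gsp => ssval g 1)).
by rewrite GTE /= pm_one mul1r.
Qed.

Definition Gobj : dobj HS := @DObj k H HS Gtobj G_proper G_minimal.
End G.


Section Maps.

Lemma Ngen_map (P Q : pmod HS) (f : pm_hom P Q) (g : H -> pm_sp P) :
  Ngen g -> Ngen (fun y => ph_fun f (g y)).
Proof.
move=> [s ->]; exists [seq (p.1, ph_fun f p.2) | p <- s].
apply: funext => y; rewrite (klin_sum (ph_lin f)) big_map.
by apply: eq_bigr => p _; rewrite ph_comm.
Qed.

Definition Gmapf (P Q : pmod HS) (f : pm_hom P Q) (g : Gsp P) : Gsp Q :=
  @mkss k _ (Nsp Q) _ (Ngen_map f (ssQ g)).

Definition Gmap (P Q : pmod HS) (f : pm_hom P Q) : d_hom (Gobj P) (Gobj Q).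
Proof.
refine (@DHom k H HS (Gobj P) (Gobj Q) (Gmapf f) _ _ _).
- by move=> c x y; apply: ss_inj; apply: funext => z /=; rewrite ph_lin.
- by move=> h m; apply: ss_inj; apply: funext => z.
- by move=> m; apply: ss_inj; apply: funext => z /=; rewrite ph_comm.
Defined.

Lemma inim_fix (X : tobj HS) m : inim (@t_proj _ _ HS X) m -> t_proj m = m.
Proof. by move=> [x <-]; rewrite t_idem. Qed.

Definition PThomf (X Y : tobj HS) (f : tm_hom X Y) (m : PTsp X) : PTsp Y :=
  @mkss k _ (fixsp Y) (th_fun f (ssval m)) (inim_fix (th_in f (ex_intro _ _ (ssfix m)))).

Lemma inim_ss (X : tobj HS) (m : PTsp X) : inim (@t_proj _ _ HS X) (ssval m).
Proof. by exists (ssval m); apply: ssfix. Qed.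

Definition PThom (X Y : tobj HS) (f : tm_hom X Y) : pm_hom (PTmod X) (PTmod Y).
Proof.
refine (@PMHom k H HS (PTmod X) (PTmod Y) (PThomf f) _ _).
- by move=> c x y; apply: ss_inj; rewrite /= th_lin //; apply: inim_ss.
- by move=> h m; apply: ss_inj; rewrite /= th_comm //; apply: inim_ss.
Defined.

Definition DThom (X Y : dobj HS) (f : d_hom X Y) : tm_hom (d_t X) (d_t Y).
Proof.
refine (@TMHom k H HS (d_t X) (d_t Y) (dh_fun f) _ _ _).
- by move=> m [x <-]; exists (dh_fun f x); rewrite dh_T.
- by move=> c x y _ _; rewrite dh_lin.
- by move=> h m _; rewrite -dh_T dh_H.
Defined.
End Maps.

Definition F_PD : functor (PMcat HS) (Dcat HS).
Proof.
refine (@Functor (PMcat HS) (Dcat HS) Gobj (fun P Q f => Gmap f) _ _ _).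
- by move=> P Q f g e m; apply: ss_inj; apply: funext => z /=; rewrite e.
- by move=> P m; apply: ss_inj; apply: funext.
- by move=> P Q R g f m; apply: ss_inj; apply: funext.
Defined.

Definition F_TP : functor (TMcat HS) (PMcat HS).
Proof.
refine (@Functor (TMcat HS) (PMcat HS) PTmod (fun X Y f => PThom f) _ _ _).
- by move=> X Y f g e m; apply: ss_inj; rewrite /= e //; apply: inim_ss.
- by move=> X m; apply: ss_inj.
- by move=> X Y Z g f m; apply: ss_inj.
Defined.

Definition F_DT : functor (Dcat HS) (TMcat HS).
Proof.
refine (@Functor (Dcat HS) (TMcat HS) (@d_t _ _ HS) (fun X Y f => DThom f) _ _ _).
- by move=> X Y f g e m _; apply: e.
- by move=> X m _.
- by move=> X Y Z g f m _.
Defined.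

Definition F_DP : functor (Dcat HS) (PMcat HS).
Proof.
refine (@Functor (Dcat HS) (PMcat HS) (fun X => PTmod (d_t X))
   (fun X Y f => PThom (DThom f)) _ _ _).
- by move=> X Y f g e m; apply: ss_inj; rewrite /= e.
- by move=> X m; apply: ss_inj.
- by move=> X Y Z g f m; apply: ss_inj.
Defined.

Definition F_TD : functor (TMcat HS) (Dcat HS).
Proof.
refine (@Functor (TMcat HS) (Dcat HS) (fun X => Gobj (PTmod X))
   (fun X Y f => Gmap (PThom f)) _ _ _).
- move=> X Y f g e m; apply: ss_inj; apply: funext => z /=; apply: ss_inj => /=.
  by rewrite e //; apply: inim_ss.
- by move=> X m; apply: ss_inj; apply: funext => z; apply: ss_inj.
- by move=> X Y Z g f m; apply: ss_inj; apply: funext => z; apply: ss_inj.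
Defined.


Section NatPM.
Variable P : pmod HS.
Local Notation pi := (@pm_pi _ _ HS P).

Definition alP : pm_hom (PTmod (Gtobj P)) P.
Proof.
refine (@PMHom k H HS (PTmod (Gtobj P)) P (fun m => ssval (ssval m) 1) _ _).
- by move=> c x y.
- move=> h m; rewrite PTpiE /= pm_one mul1r.
  by rewrite -{1}(ssfix m) GTE.
Defined.

Definition beP : pm_hom P (PTmod (Gtobj P)).
Proof.
refine (@PMHom k H HS P (PTmod (Gtobj P))
   (fun m => @mkss k _ (fixsp (Gtobj P)) (phi m) (GT_phi m)) _ _).
- by move=> c x y; apply: ss_inj; apply: ss_inj; apply: funext => z /=; rewrite pm_lin.
- by move=> h m; apply: ss_inj; apply: ss_inj; apply: funext => z /=; rewrite mul1r.
Defined.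
End NatPM.

Lemma natiso_PM : natiso_id F_PD F_DP.
Proof.
exists alP, beP; split.
- by move=> P m /=; rewrite pm_one.
- move=> P m; apply: ss_inj; rewrite /= -[RHS](ssfix m).
  by apply: ss_inj; apply: funext.
- by move=> P Q f m.
Qed.


Section NatT.
Variable X : tobj HS.
Local Notation M := (t_mod X).
Local Notation T := (@t_proj _ _ HS X).

Definition alT : tm_hom (Gtobj (PTmod X)) X.
Proof.
refine (@TMHom k H HS (Gtobj (PTmod X)) X (fun f => ssval (ssval f 1)) _ _ _).
- by move=> f _; exists (ssval (ssval f 1)); apply: ssfix.
- by move=> c x y _ _.
- move=> h f hf; have e := inim_fix hf.
  transitivity (ssval (ssval f h)).
    rewrite /=.
    by rewrite hm_one mul1r ssfix.
  by rewrite -{1}e.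
Defined.

Definition beTf (m : hm_sp M) : Gsp (PTmod X) :=
  phi (P:=PTmod X) (@mkss k _ (fixsp X) (T m) (t_idem _)).

Definition beT : tm_hom X (Gtobj (PTmod X)).
Proof.
refine (@TMHom k H HS X (Gtobj (PTmod X)) beTf _ _ _).
- by move=> m _; exists (beTf m); apply: GT_phi.
- move=> c x y _ _; apply: ss_inj; apply: funext => z; apply: ss_inj.
  rewrite /=.
  by rewrite t_lin hm_lin t_lin.
- move=> h m hm; apply: ss_inj; apply: funext => z; apply: ss_inj.
  by rewrite /= t_idem mul1r (inim_fix hm).
Defined.
End NatT.

Lemma natiso_TM : natiso_id F_TD F_DT.
Proof.
exists alT, beT; split.
- by move=> X m hm /=; rewrite hm_one t_idem (inim_fix hm).
- move=> X f hf; transitivity (t_proj f); last exact: inim_fix hf.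
  apply: ss_inj; apply: funext => z; apply: ss_inj; rewrite /=.
  by rewrite ssfix.
- by move=> X Y f m.
Qed.


Section NatD.
Variable X : dobj HS.
Local Notation M := (t_mod (d_t X)).
Local Notation T := (@t_proj _ _ HS (d_t X)).
Local Notation PX := (PTmod (d_t X)).
Let hT := @t_lin _ _ HS (d_t X).
Let Tid := @t_idem _ _ HS (d_t X).

Definition psif (m : hm_sp M) : H -> pm_sp PX :=
  fun y => @mkss k _ (fixsp (d_t X)) (T (act M y m)) (Tid _).

Lemma psif0 : psif 0 = 0.
Proof. apply: funext => y; apply: ss_inj; rewrite /= act0 (klin0 hT). by []. Qed.

Lemma psifL c x y : psif (c *: x + y) = c *: psif x + psif y.
Proof. apply: funext => z; apply: ss_inj; rewrite fctE /= hm_lin hT. by []. Qed.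

Lemma psifA h x : psif (act M h x) = (fun y => psif x (y * h)).
Proof. by apply: funext => z; apply: ss_inj; rewrite /= hm_mul. Qed.

Lemma psi_N m : Ngen (psif m).
Proof.
apply: (@d_proper _ _ HS X (fun m => Ngen (psif m))) => //.
- split; first by rewrite psif0; apply: Ngen0.
  + by move=> c x y hx hy; rewrite psifL; apply: NgenL.
  + by move=> h x hx; rewrite psifA; apply: Ngen_shift.
- move=> x hx.
  have -> : psif x = fun y => pm_pi (p:=PX) y (@mkss k _ (fixsp (d_t X)) (T x) (Tid _)).
    by apply: funext => z; apply: ss_inj; rewrite /= (inim_fix hx).
  exact: Ngen_phi.
Qed.

Definition psi (m : hm_sp M) : Gsp PX := @mkss k _ (Nsp PX) _ (psi_N m).

Lemma psi_lin : klin psi.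
Proof. by move=> c x y; apply: ss_inj; rewrite /= psifL. Qed.
Lemma psi_H h m : psi (act M h m) = Gact h (psi m).
Proof. by apply: ss_inj; rewrite /= psifA. Qed.
Lemma psi_T m : GT (psi m) = psi (T m).
Proof. by apply: ss_inj; apply: funext => y; apply: ss_inj; rewrite /= hm_one. Qed.

Lemma psi_inj m m' : psi m = psi m' -> m = m'.
Proof.
move/(congr1 (fun f => ssval f)) => /= e.
apply/eqP; rewrite -subr_eq0; apply/eqP.
apply: (@d_minimal _ _ HS X (fun z => forall y, T (act M y z) = 0)).
- split.
  + by move=> y; rewrite act0 (klin0 hT).
  + by move=> c x y hx hy z; rewrite hm_lin hT hx hy scaler0 addr0.
  + by move=> h x hx y; rewrite -hm_mul hx.
- by move=> z hz; have := hz 1; rewrite hm_one.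
- move=> y; rewrite (klinB (hm_lin y)) (klinB hT).
  have := congr1 (fun f => ssval (f y)) e => /= ->.
  by rewrite subrr.
Qed.

Lemma psi_surj (f : Gsp PX) : exists m, psi m = f.
Proof.
have [s e] := ssQ f.
exists (\sum_(p <- s) act M p.1 (ssval p.2)).
apply: ss_inj; rewrite e; apply: funext => y; apply: ss_inj => /=.
rewrite (klin_sum (hm_lin y)) (klin_sum hT) (klin_sum (@ssval_lin _ _)).
by apply: eq_bigr => p _; rewrite /= hm_mul.
Qed.

Definition alD (f : Gsp PX) : hm_sp M := proj1_sig (cid (psi_surj f)).
Lemma psi_alD f : psi (alD f) = f. Proof. exact: (proj2_sig (cid (psi_surj f))). Qed.
Lemma alD_psi m : alD (psi m) = m. Proof. exact: psi_inj (psi_alD _). Qed.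

Definition alDh : d_hom (Gobj PX) X.
Proof.
refine (@DHom k H HS (Gobj PX) X alD _ _ _).
- by move=> c x y; apply: psi_inj; rewrite psi_lin !psi_alD.
- by move=> h f; apply: psi_inj; rewrite psi_H !psi_alD.
- by move=> f; apply: psi_inj; rewrite -psi_T !psi_alD.
Defined.

Definition psih : d_hom X (Gobj PX).
Proof.
refine (@DHom k H HS X (Gobj PX) psi psi_lin psi_H _).
by move=> m; apply: psi_T.
Defined.
End NatD.

Lemma alD_nat (X Y : dobj HS) (g : d_hom X Y) (f : Gsp (PTmod (d_t X))) :
  dh_fun g (alD f) = alD (Gmapf (PThom (DThom g)) f).
Proof.
have ef : f = psi (alD f) by rewrite psi_alD.
rewrite {2}ef; apply: psi_inj; rewrite psi_alD.
apply: ss_inj; apply: funext => y; apply: ss_inj => /=.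
by rewrite -dh_H dh_T.
Qed.

Lemma natiso_D1 : natiso_id F_DP F_PD.
Proof.
exists alDh, psih; split.
- by move=> X m; apply: alD_psi.
- by move=> X f; apply: psi_alD.
- by move=> X Y g f; apply: alD_nat.
Qed.

Lemma natiso_D2 : natiso_id F_DT F_TD.
Proof.
exists alDh, psih; split.
- by move=> X m; apply: alD_psi.
- by move=> X f; apply: psi_alD.
- by move=> X Y g f; apply: alD_nat.
Qed.

End Main.

Theorem mainTheorem11 (k : fieldType) (H : algType k) (HS : hopf H) :
  equivalent (PMcat HS) (Dcat HS) /\ equivalent (TMcat HS) (Dcat HS).
Proof.
split.
- exists (F_PD HS), (F_DP HS); split; [exact: natiso_PM | exact: natiso_D1].
- exists (F_TD HS), (F_DT HS); split; [exact: natiso_TM | exact: natiso_D2].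
Qed.
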